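(* Let $n,k$ be integers with $n\geq k+1\geq 2$. Then $E_n(as_k)=\frac{4(n-k)+5}{6}$ holds if and only if $E_n(zs_k)=\frac{2(n-k)+4}{3}$ holds.
   Context: $\mathfrak{S}_n$ is the set of permutations $w=w_1\cdots w_n$ of $\{1,\dots,n\}$. A subsequence $w_{i_1}\cdots w_{i_s}$ ($i_1<\dots<i_s$) is alternating if $w_{i_1}>w_{i_2}<w_{i_3}>\cdots$, reverse alternating if $w_{i_1}<w_{i_2}>w_{i_3}<\cdots$, and zigzagging if it is alternating or reverse alternating. It is $k$-alternating (resp. $k$-zigzagging) if it is alternating (resp. zigzagging) and $|w_{i_j}-w_{i_{j+1}}|\geq k$ for all $j$. $as_k(w)$ (resp. $zs_k(w)$) is the maximal length of a $k$-alternating (resp. $k$-zigzagging) subsequence of $w$. $E_n(as_k)=\frac1{n!}\sum_{w\in\mathfrak{S}_n}as_k(w)$ and $E_n(zs_k)=\frac1{n!}\sum_{w\in\mathfrak{S}_n}zs_k(w)$. *)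

(* Defs.v *)
From mathcomp Require Import all_boot all_order all_algebra all_fingroup.
Set Implicit Arguments. Unset Strict Implicit. Unset Printing Implicit Defensive.
Import GRing.Theory Num.Theory.

(* A permutation s : 'S_n of {0,..,n-1} represents w = w_1...w_n with
   w_{i+1} = s i + 1 (values in {1,..,n}). *)
Definition wval (n : nat) (s : 'S_n) (i : 'I_n) : nat := (s i).+1.

Definition subs (n : nat) (s : 'S_n) (A : {set 'I_n}) : seq nat :=
  [seq wval s i | i <- enum A].

Definition alternating (t : seq nat) : bool :=
  [forall j : 'I_(size t),
     (j.+1 < size t) ==>
       (if odd j then nth 0 t j < nth 0 t j.+1 else nth 0 t j > nth 0 t j.+1)].

Definition rev_alternating (t : seq nat) : bool :=
  [forall j : 'I_(size t),
     (j.+1 < size t) ==>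
       (if odd j then nth 0 t j > nth 0 t j.+1 else nth 0 t j < nth 0 t j.+1)].

Definition zigzagging (t : seq nat) : bool := alternating t || rev_alternating t.

(* |a - b| on nat (truncated subtractions, one of them is 0) *)
Definition absdiff (a b : nat) : nat := (a - b) + (b - a).

Definition gaps_ge (k : nat) (t : seq nat) : bool :=
  [forall j : 'I_(size t),
     (j.+1 < size t) ==> (k <= absdiff (nth 0 t j) (nth 0 t j.+1))].

Definition k_alternating (k : nat) (t : seq nat) : bool :=
  alternating t && gaps_ge k t.
Definition k_zigzagging (k : nat) (t : seq nat) : bool :=
  zigzagging t && gaps_ge k t.

Definition as_k (k n : nat) (s : 'S_n) : nat :=
  \max_(A : {set 'I_n} | k_alternating k (subs s A)) #|A|.
Definition zs_k (k n : nat) (s : 'S_n) : nat :=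
  \max_(A : {set 'I_n} | k_zigzagging k (subs s A)) #|A|.

Definition E_as (n k : nat) : rat :=
  ((\sum_(s : 'S_n) (as_k k s)%:R) / (n`!)%:R)%R.
Definition E_zs (n k : nat) : rat :=
  ((\sum_(s : 'S_n) (zs_k k s)%:R) / (n`!)%:R)%R.

(* Main.v *)
Require Import Defs.
From mathcomp Require Import all_boot all_order all_algebra all_fingroup.
From mathcomp Require Import zify ring lra.
Import GRing.Theory Num.Theory.

Module Aux.

Fixpoint zz (b : bool) (k : nat) (t : seq nat) : bool :=
  match t with
  | x :: t' => match t' with
               | y :: _ => (if b then x + k <= y else y + k <= x) && zz (~~ b) k t'
               | [::] => true end
  | [::] => true end.

Definition step (b : bool) (k : nat) (t : seq nat) (j : nat) : bool :=
  if odd j (+) b then nth 0 t j + k <= nth 0 t j.+1 else nth 0 t j.+1 + k <= nth 0 t j.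

Lemma zzP b k t : reflect (forall j, j.+1 < size t -> step b k t j) (zz b k t).
Proof.
elim: t b => [|x t IH] b /=; first by constructor.
case: t IH => [|y t] IH; first by constructor => -[|j].
apply: (iffP andP) => [[h1 h2] | h].
  move/IH: h2 => h2 [|j] hj.
  + by clear h2; rewrite /step /=; case: b h1.
  + have := h2 j hj; clear h1 h2; rewrite /step /=; by case: b; case: (odd j).
- split; first by have := h 0 isT; clear h; rewrite /step /=; case: b.
  apply/IH => j hj; have := h j.+1 hj; clear h; rewrite /step /=; by case: b; case: (odd j).
Qed.

Lemma alt_zz k t : 1 <= k -> k_alternating k t = zz false k t.
Proof.
move=> hk; apply/idP/zzP.
- case/andP=> /forallP ha /forallP hg j hj.
  have hj' : j < size t by apply: ltnW.
  have := ha (Ordinal hj'); have := hg (Ordinal hj'); rewrite /= hj /= /step /absdiff addbF.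
  case: (odd j) => h1 h2; lia.
- move=> h; apply/andP; split; apply/forallP => j; apply/implyP => hj;
  have := h j hj; rewrite /step /absdiff addbF; case: (odd j) => h1; lia.
Qed.

Lemma ralt_zz k t : 1 <= k -> (rev_alternating t && gaps_ge k t) = zz true k t.
Proof.
move=> hk; apply/idP/zzP.
- case/andP=> /forallP ha /forallP hg j hj.
  have hj' : j < size t by apply: ltnW.
  have := ha (Ordinal hj'); have := hg (Ordinal hj'); rewrite /= hj /= /step /absdiff addbT.
  case: (odd j) => /= h1 h2; lia.
- move=> h; apply/andP; split; apply/forallP => j; apply/implyP => hj;
  have := h j hj; rewrite /step /absdiff addbT; case: (odd j) => /= h1; lia.
Qed.

Lemma zig_zz k t : 1 <= k -> k_zigzagging k t = zz false k t || zz true k t.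
Proof.
move=> hk; rewrite -alt_zz // -ralt_zz // /k_zigzagging /k_alternating /zigzagging.
by case: (alternating t); case: (rev_alternating t); case: (gaps_ge k t).
Qed.

Set Implicit Arguments.
Section S.
Variable n : nat.

Lemma inc_A (A : {set 'I_n}) : sorted ltn (map val (enum A)).
Proof.
  rewrite -[enum _](eq_filter (mem_enum _)).
  rewrite -(eq_filter (mem_map val_inj _)) -filter_map.
  by rewrite (sorted_filter ltn_trans) // unlock val_ord_enum iota_ltn_sorted.
Qed.

Lemma enum_set (l : seq 'I_n) : sorted ltn (map val l) -> enum [set i in l] = l.
Proof.
move=> hl; apply: (inj_map val_inj).
apply: (irr_sorted_eq ltn_trans ltnn) => //; first exact: inc_A.
move=> y; apply/mapP/mapP => -[x hx ->]; exists x => //;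
  by move: hx; rewrite mem_enum inE.
Qed.

Definition mxp (P : seq nat -> bool) (s : 'S_n) :=
  \max_(A : {set 'I_n} | P (subs s A)) #|A|.

Lemma mxp_ub (P : seq nat -> bool) s (l : seq 'I_n) : sorted ltn (map val l) -> P (map (wval s) l) ->
  size l <= mxp P s.
Proof.
move=> hl hP; have e := enum_set _ hl.
have -> : size l = #|[set i in l]| by rewrite cardE e.
apply: leq_bigmax_cond; by rewrite /subs e.
Qed.

Lemma mxp_att (P : seq nat -> bool) s : P [::] -> exists l : seq 'I_n,
  [/\ sorted ltn (map val l), P (map (wval s) l) & size l = mxp P s].
Proof.
move=> h0; have h : P (subs s set0) by rewrite /subs enum_set0.
rewrite /mxp (bigmax_eq_arg _ h).
case: arg_maxnP => //= A hA _.
by exists (enum A); split => //; [exact: inc_A | rewrite cardE].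
Qed.

End S.
Unset Implicit Arguments.

Lemma zz_behead b k t : zz b k t -> zz (~~ b) k (behead t).
Proof. case: t => [|x [|y t]] //=; by case/andP. Qed.

Lemma zz2 b k x y t : zz b k [:: x, y & t] =
  (if b then x + k <= y else y + k <= x) && zz (~~ b) k (y :: t).
Proof. by []. Qed.

Lemma sorted_behead (l : seq nat) : sorted ltn l -> sorted ltn (behead l).
Proof. case: l => [|x l] //=; exact: path_sorted. Qed.

Lemma mxp_adj n k (s : 'S_n) b :
  mxp (zz b k) s <= (mxp (zz (~~ b) k) s).+1.
Proof.
have [l [hl hz <-]] := mxp_att (zz b k) s isT.
case: l hl hz => [|x l] // hl hz; rewrite /=.
rewrite ltnS; apply: (mxp_ub _ s l); first by move: hl => /=; exact: path_sorted.
exact: (zz_behead _ _ _ hz).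
Qed.

Lemma mxp_neq n k (s : 'S_n) : 1 <= k -> k < n ->
  mxp (zz false k) s != mxp (zz true k) s.
Proof.
move=> hk hkn; apply/negP => /eqP E.
set M := mxp (zz true k) s in E.
have hM : 2 <= M.
  have h0 : 0 < n by lia.
  pose i1 := ((s^-1)%g (Ordinal h0)); pose i2 := ((s^-1)%g (Ordinal hkn)).
  have v1 : wval s i1 = 1 by rewrite /wval /i1 permKV.
  have v2 : wval s i2 = k.+1 by rewrite /wval /i2 permKV.
  have [h12|h21|h12] := ltngtP i1 i2.
  - apply: (mxp_ub _ s [:: i1; i2]) => /=; first by rewrite h12.
    rewrite v1 v2; lia.
  - rewrite -E; apply: (mxp_ub _ s [:: i2; i1]) => /=; first by rewrite h21.
    rewrite v1 v2; lia.
  - have := congr1 (wval s) (val_inj h12); rewrite v1 v2; lia.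
have [la [hla hza sa]] := mxp_att (zz false k) s isT.
have [lb [hlb hzb sb]] := mxp_att (zz true k) s isT.
rewrite E -/M in sa; rewrite -/M in sb.
case: la hla hza sa => [|pa1 [|pa2 ta]] hla hza sa; try by rewrite -sa in hM.
case: lb hlb hzb sb => [|pb1 [|pb2 tb]] hlb hzb sb; try by rewrite -sb in hM.
move: hza hzb; rewrite !map_cons !zz2 /= => /andP [a12 hza] /andP [b12 hzb].
move: hla hlb; rewrite !map_cons /= => /andP [pa12 hla] /andP [pb12 hlb].
have bigF : forall l : seq 'I_n, sorted ltn (map val l) -> zz false k (map (wval s) l) ->
   size l = M.+1 -> False.
  by move=> l h1 h2 h3; have := mxp_ub _ _ _ h1 h2; rewrite h3 E; lia.
have bigT : forall l : seq 'I_n, sorted ltn (map val l) -> zz true k (map (wval s) l) ->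
   size l = M.+1 -> False.
  by move=> l h1 h2 h3; have := mxp_ub _ _ _ h1 h2; rewrite h3 -/M; lia.
have [G1|G1] := leqP (wval s pb1 + k) (wval s pa1).
- have [p|p|p] := ltngtP pb1 pa1.
  + apply: (bigT [:: pb1, pa1, pa2 & ta]); last by rewrite -sa.
      by rewrite /= p pa12.
    by rewrite !map_cons !zz2 /= G1 a12.
  + apply: (bigF [:: pa1, pb1, pb2 & tb]); last by rewrite -sb.
      by rewrite /= p pb12.
    by rewrite !map_cons !zz2 /= G1 b12.
  + by move: G1; rewrite (val_inj p); lia.
- have G2 : wval s pa2 + k <= wval s pb2 by lia.
  have [p|p|p] := ltngtP pa2 pb2.
  + apply: (bigF [:: pa1, pa2, pb2 & tb]); last by rewrite -sb.
      by rewrite /= pa12 p.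
    by rewrite !map_cons !zz2 /= a12 G2.
  + apply: (bigT [:: pb1, pb2, pa2 & ta]); last by rewrite -sa.
      by rewrite /= pb12 p.
    by rewrite !map_cons !zz2 /= b12 G2.
  + by move: G2; rewrite (val_inj p); lia.
Qed.

Lemma zz_compl N b k t : all (fun v => v <= N) t ->
  zz b k (map (fun v => N - v) t) = zz (~~ b) k t.
Proof.
elim: t b => [|x t IH] b //.
case: t IH => [|y t] IH //.
rewrite [all _ _]/= => /andP [hx /andP [hy ht]].
have e := IH (~~ b); rewrite map_cons in e.
rewrite map_cons map_cons !zz2 -map_cons e; last by rewrite /= hy.
clear e IH; congr (_ && _); case: b => /=; apply/idP/idP; lia.
Qed.

Lemma subs_compl n (s : 'S_n) A :
  subs (s * perm (@rev_ord_inj n)) A = map (fun v => n.+1 - v) (subs s A).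
Proof.
rewrite /subs -map_comp; apply: eq_map => i /=.
rewrite /wval permM permE /=.
have := ltn_ord (s i); lia.
Qed.

Lemma subs_le n (s : 'S_n) A : all (fun v => v <= n.+1) (subs s A).
Proof. apply/allP => v /mapP [i _ ->]; rewrite /wval; have := ltn_ord (s i); lia. Qed.

Lemma mxp_sym n k (s : 'S_n) b :
  mxp (zz b k) (s * perm (@rev_ord_inj n)) = mxp (zz (~~ b) k) s.
Proof.
rewrite /mxp; apply: eq_bigl => A; by rewrite subs_compl zz_compl // subs_le.
Qed.

Lemma sum_sym n k b :
  \sum_(s : 'S_n) mxp (zz b k) s = \sum_(s : 'S_n) mxp (zz (~~ b) k) s.
Proof.
rewrite (reindex_inj (mulIg (perm (@rev_ord_inj n)))) /=.
by apply: eq_bigr => s _; rewrite mxp_sym.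
Qed.

Lemma as_mxp n k (s : 'S_n) : 1 <= k -> as_k k s = mxp (zz false k) s.
Proof. by move=> hk; rewrite /as_k /mxp; apply: eq_bigl => A; rewrite alt_zz. Qed.

Lemma zs_mxp n k (s : 'S_n) : 1 <= k ->
  zs_k k s = maxn (mxp (zz false k) s) (mxp (zz true k) s).
Proof.
move=> hk.
have -> : zs_k k s = mxp (fun t => zz false k t || zz true k t) s.
  by rewrite /zs_k /mxp; apply: eq_bigl => A; rewrite zig_zz.
apply/eqP; rewrite eqn_leq; apply/andP; split.
- have [l [hl hz <-]] := mxp_att (fun t => zz false k t || zz true k t) s isT.
  case/orP: hz => hz; rewrite leq_max; apply/orP; [left|right]; exact: mxp_ub.
- rewrite geq_max; apply/andP; split.
  + have [l [hl hz <-]] := mxp_att (zz false k) s isT.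
    by apply: mxp_ub => //; rewrite hz.
  + have [l [hl hz <-]] := mxp_att (zz true k) s isT.
    by apply: mxp_ub => //; rewrite hz orbT.
Qed.

Lemma per_s n k (s : 'S_n) : 1 <= k -> k < n ->
  (zs_k k s).*2 = (as_k k s + mxp (zz true k) s).+1.
Proof.
move=> hk hkn; rewrite zs_mxp // as_mxp //.
have h1 := mxp_adj n k s false; have h2 := mxp_adj n k s true.
have h3 := mxp_neq n k s hk hkn. simpl in h1, h2.
move: h1 h2 h3; set a := mxp _ s; set b := mxp _ s => h1 h2 /eqP h3.
rewrite /maxn; case: ltnP => h; lia.
Qed.

Lemma sum_rel n k : 1 <= k -> k < n ->
  (\sum_(s : 'S_n) zs_k k s).*2 = (\sum_(s : 'S_n) as_k k s).*2 + n`!.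
Proof.
move=> hk hkn.
rewrite -addnn -big_split /=.
rewrite (eq_bigr (fun s => (as_k k s + mxp (zz true k) s) + 1)); last first.
  by move=> s _; rewrite addnn per_s // addn1.
rewrite !big_split /= -(sum_sym n k false) /=.
rewrite (eq_bigr _ (fun s _ => as_mxp n k s hk)).

rewrite sum1_card card_Sn addnn. done.
Qed.
End Aux.
Import Aux.

Theorem lemma1p2 (n k : nat) (hk : 1 <= k) (hn : k.+1 <= n) :
  E_as n k = ((4 * (n - k) + 5)%:R / 6%:R)%R <->
  E_zs n k = ((2 * (n - k) + 4)%:R / 3%:R)%R.
Proof.
Local Open Scope ring_scope.
have hf : (n`!)%:R != 0 :> rat by rewrite pnatr_eq0 -lt0n fact_gt0.
have hZ : ((\sum_(s : 'S_n) zs_k k s)%:R : rat) =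
          (\sum_(s : 'S_n) as_k k s)%:R + (n`!)%:R / 2.
  have := congr1 (fun x => x%:R : rat) (sum_rel n k hk hn).
  rewrite /= -!muln2 natrD !natrM => h.
  apply: (mulIf (_ : (2%:R : rat) != 0)) => //; rewrite h; by field.
have E : E_zs n k = E_as n k + 1 / 2.
  rewrite /E_zs /E_as -!natr_sum hZ; field; exact: hf.
rewrite E !natrD.
split => h; lra.
Qed.
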